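(* Let $t_0>0$ and let $f:\{-1,0,1\}\times[t_0,\infty)\to[0,\infty)$ be such that $f(j,t)$ is Lebesgue measurable in $t$ for each $j$. If there are $D\ge0$ and $\alpha\in\mathbb{R}$ such that, for all $j\in\{0,1\}$ and all $t_2\ge t_1\ge t_0$, $$f(j,t_2)+\int_{t_1}^{t_2}f(j-1,t)\,dt\lesssim f(j,t_1)+t_1^{\alpha+j}D,$$ then for all $t\ge2t_0$, $$f(0,t)\lesssim_\alpha t^{-1}f(1,t/2)+t^{\alpha}D.$$
   Context: $A\lesssim B$ means $A\le CB$ for a constant $C$ independent of $t,t_1,t_2$ and $D$; $\lesssim_\alpha$ means the constant may also depend on $\alpha$. *)

(* Defs.v *)
From HB Require Import structures.
From mathcomp Require Import all_boot all_order all_algebra.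
From mathcomp Require Export all_classical all_reals all_analysis.
Set Implicit Arguments. Unset Strict Implicit. Unset Printing Implicit Defensive.

(* Main.v *)
Require Import Defs.
From HB Require Import structures.
From mathcomp Require Import all_boot all_order all_algebra.
From mathcomp Require Import all_classical all_reals all_analysis.
From mathcomp Require Import ring lra.
Import Order.TTheory GRing.Theory Num.Theory.
Local Open Scope classical_set_scope.
Local Open Scope ring_scope.

Lemma pow_bound (R : realType) (alpha t s : R) : 0 < t -> t / 2 <= s <= t ->
  s `^ alpha <= ((2^-1) `^ alpha + 1) * t `^ alpha.
Proof.
move=> t0 /andP[h1 h2].
have s0 : 0 < s by apply: lt_le_trans h1; rewrite divr_gt0.
have tp : 0 <= t `^ alpha by apply: powR_ge0.
have hp : 0 <= (2^-1 : R) `^ alpha by apply: powR_ge0.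
have [a0|a0] := leP 0 alpha.
  apply: (@le_trans _ _ (t `^ alpha)).
    by apply: (ge0_ler_powR a0) => //; rewrite nnegrE ltW.
  by rewrite mulrDl mul1r lerDr mulr_ge0.
apply: (@le_trans _ _ ((t / 2) `^ alpha)).
  have E : forall x : R, x `^ alpha = (x `^ (- alpha))^-1.
    by move=> x; rewrite -powRN opprK.
  rewrite (E s) (E (t / 2)).
  have T0 : 0 < t / 2 by rewrite divr_gt0.
  rewrite lef_pV2 ?posrE ?powR_gt0 //.
  have na : 0 <= - alpha by rewrite oppr_ge0 ltW.
  by apply: (ge0_ler_powR na) => //; rewrite nnegrE ltW.
rewrite powRM ?invr_ge0 ?(ltW t0) // mulrDl mul1r [X in _ <= X + _]mulrC lerDl //.
Qed.

Theorem lemma5p1 (R : realType) (alpha C : R) (hC : 0 < C) :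
  exists C' : R, 0 < C' /\
  forall (t0 D : R) (f : int -> R -> R),
    0 < t0 -> 0 <= D ->
    (forall j : int, (-1 <= j <= 1)%R ->
       measurable_fun `[t0, +oo[ (f j)) ->
    (forall j : int, (-1 <= j <= 1)%R -> forall t, t0 <= t -> 0 <= f j t) ->
    (forall j : int, (0 <= j <= 1)%R ->
       forall t1 t2 : R, t0 <= t1 -> t1 <= t2 ->
         ((f j t2)%:E + \int[lebesgue_measure]_(x in `[t1, t2]) (f (j - 1) x)%:E
           <= (C * (f j t1 + t1 `^ (alpha + j%:~R) * D))%:E)%E) ->
    forall t : R, 2 * t0 <= t ->
      f 0 t <= C' * (t^-1 * f 1 (t / 2) + t `^ alpha * D).
Proof.
pose M := (2^-1 : R) `^ alpha + 1.
have M0 : 0 < M by rewrite /M ltr_pwDr // powR_ge0.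
exists (2 * C ^+ 2 + C * M + C ^+ 2 * M); split.
  by rewrite !addr_gt0 ?mulr_gt0 ?exprn_gt0.
move=> t0 D f t0p D0 mf f0 hf t ht.
have tp : 0 < t by lra.
pose T := t / 2.
have Tt0 : t0 <= T by rewrite /T; lra.
have TT : T <= t by rewrite /T; lra.
have Tp : 0 < T by lra.
have P0 : 0 <= t `^ alpha by apply: powR_ge0.
have hs : forall s, T <= s <= t -> f 0 t <= C * (f 0 s + M * t `^ alpha * D).
  move=> s /andP[s1 s2].
  have := hf 0 erefl s t (le_trans Tt0 s1) s2.
  rewrite sub0r addr0.
  have I0 : (0 <= \int[lebesgue_measure]_(x in `[s, t]) (f (-1) x)%:E)%E.
    apply: integral_ge0 => x /=; rewrite in_itv /= => /andP[x1 _].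
    by rewrite lee_fin f0 //; lra.
  move=> /(le_trans (leeDl _ I0)); rewrite lee_fin => H.
  apply: (le_trans H); rewrite ler_wpM2l ?(ltW hC) // lerD2l ler_wpM2r //.
  by apply: pow_bound => //; rewrite s1 s2.
have h1 : (\int[lebesgue_measure]_(x in `[T, t]) (f 0 x)%:E
    <= (C * (f 1 T + T `^ alpha * T * D))%:E)%E.
  have := hf 1 erefl T t Tt0 TT.
  rewrite subrr powRD; last by rewrite (gt_eqF Tp) implybT.
  rewrite powRr1 ?(ltW Tp) //.
  by apply: le_trans; rewrite leeDr // lee_fin f0 //; lra.
pose c := f 0 t / C - M * t `^ alpha * D.
have u0 : 0 <= t^-1 * f 1 (t / 2).
  by rewrite mulr_ge0 ?invr_ge0 ?(ltW tp) // f0 //.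
have PD0 : 0 <= t `^ alpha * D by rewrite mulr_ge0.
have fin : f 0 t <= 2 * C ^+ 2 * (t^-1 * f 1 (t / 2)) + C ^+ 2 * M * (t `^ alpha * D)
                     + C * M * (t `^ alpha * D).
  have [hc|hc] := leP c 0.
    have : f 0 t <= C * M * (t `^ alpha * D).
      move: hc; rewrite /c subr_le0 ler_pdivrMr // => H.
      by apply: (le_trans H); rewrite mulrC !mulrA.
    move=> H; apply: (le_trans H); rewrite lerDr.
    have C0 := ltW hC; have M0' := ltW M0.
    by apply: addr_ge0; apply: mulr_ge0 => //; rewrite ?mulr_ge0 ?exprn_ge0.
  have hI : ((c * T)%:E <= \int[lebesgue_measure]_(x in `[T, t]) (f 0 x)%:E)%E.
    have mI : measurable (`[T, t] : set R) by apply: measurable_itv.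
    have E : (c * T)%:E = (\int[lebesgue_measure]_(x in `[T, t]) (cst c%:E) x)%E.
      rewrite integral_cst //.
      rewrite -[X in (_ * X)%E]/(lebesgue_measure (`[T, t]%classic : set R)).
      rewrite lebesgue_measure_itv /= ifT ?lte_fin; last by rewrite /T; lra.
      rewrite -EFinD -EFinM; congr (_%:E); congr (_ * _); rewrite /T; lra.
    rewrite E; apply: ge0_le_integral => //.
    - by move=> x _ /=; rewrite lee_fin; exact: ltW.
    - apply/measurable_realfun.measurable_EFinP.
      apply: (measurable_funS _ _ (mf 0 erefl)); first exact: measurable_itv.
      by move=> x /=; rewrite !in_itv /= andbT => /andP[x1 _]; lra.
    - move=> x /=; rewrite in_itv /= => /andP[x1 x2]; rewrite lee_fin.
      have H := hs x (introT andP (conj x1 x2)).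
      rewrite /c lerBlDr ler_pdivrMr // [X in _ <= X]mulrC //.
  have hcT : c * T <= C * (f 1 T + T `^ alpha * T * D).
    by rewrite -lee_fin; exact: le_trans hI h1.
  have Q : T `^ alpha <= M * t `^ alpha.
    by apply: pow_bound => //; rewrite TT /T lexx.
  have QQ : C * (T * D) * T `^ alpha <= C * (T * D) * (M * t `^ alpha).
    by rewrite ler_wpM2l // mulr_ge0 // ?(ltW hC) // mulr_ge0 // ltW.
  have e : C * f 1 T * (2 * t^-1) * T = C * f 1 T.
    by rewrite /T; field; rewrite gt_eqF.
  have hc2 : c <= C * f 1 T * (2 * t^-1) + C * M * (t `^ alpha * D).
    rewrite -(ler_pM2r Tp); apply: (le_trans hcT).
    rewrite mulrDl e; lra.
  have hh : C * c <= C * (C * f 1 T * (2 * t^-1) + C * M * (t `^ alpha * D)).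
    by rewrite ler_wpM2l // ltW.
  have ef : f 0 t = C * c + C * M * (t `^ alpha * D).
    by rewrite /c; field; rewrite gt_eqF.
  rewrite ef; move: hh; rewrite /T; lra.
have C0 := ltW hC; have M0' := ltW M0.
apply: (le_trans fin).
have a1 : 0 <= C * M * (t^-1 * f 1 (t / 2)) by apply: mulr_ge0 => //; apply: mulr_ge0.
have a2 : 0 <= C ^+ 2 * M * (t^-1 * f 1 (t / 2)) by apply: mulr_ge0 => //; apply: mulr_ge0 => //; apply: exprn_ge0.
have a3 : 0 <= C ^+ 2 * (t `^ alpha * D) by apply: mulr_ge0 => //; apply: exprn_ge0.
lra.
Qed.
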